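(* Let $G$ be a graph, $W$ a $(w\times w)$-wall in $G$, and $C$ a cycle in $G$ such that for some choice of pegs of $W$ every peg lies in $V(C)$. Let $G_0,G_1,\dots,G_k$ and a plane graph $\tilde G$ witness that $G$ is $C$-flat. Then $\tilde G$ contains a $(w-2)\times(w-2)$ grid as a minor.
   Context: Elementary wall of height $h$, width $r$: from the $h\times2r$ grid with vertices $v_{i,j}$, in column $j$ with vertical edges $e^j_1,\dots,e^j_{h-1}$ ordered from $v_{1,j}$, delete $e^j_i$ for even $i$ when $j$ is odd and for odd $i$ when $j$ is even, then delete degree-1 vertices. Pegs are the degree-2 vertices of its outer boundary cycle (first row, last row, and the leftmost and rightmost vertical paths). A $(w\times w)$-wall is a subdivision of the elementary wall with $h=r=w$; its pegs are images of the pegs. $G$ is $C$-flat, witnessed by subgraphs $G_0,\dots,G_k$ and a plane graph $\tilde G$, if: $G=G_0\cup\dots\cup G_k$, pairwise edge-disjoint; $C\subseteq G_0$; $G_0\subseteq\tilde G$, $V(\tilde G)=V(G_0)$, and $C$ bounds the outer face of $\tilde G$; for $i\in[k]$, $|V(G_i)\cap V(G_0)|\le3$, if it equals $\{u,v\}$ then $uv\in E(\tilde G)$, if it equals $\{u,v,w\}$ then some finite face of $\tilde G$ is bounded exactly by $uv,vw,uw$; and $V(G_i)\cap V(G_j)\subseteq V(G_0)$ for distinct $i,j\in[k]$. *)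

(* Defs.v *)
From HB Require Import structures.
From mathcomp Require Import all_boot all_order all_algebra.
From mathcomp Require Import all_classical all_reals all_analysis.
Set Implicit Arguments. Unset Strict Implicit. Unset Printing Implicit Defensive.
Import Order.TTheory GRing.Theory Num.Theory.
Import numFieldNormedType.Exports.

Record sgraph (V : finType) := SGraph { gV : {set V}; gE : {set {set V}} }.

Section Graphs.
Variable V : finType.
Implicit Types G H C : sgraph V.

Definition wf_graph G := forall e, e \in gE G -> (#|e| == 2) && (e \subset gV G).
Definition adj G (u v : V) : bool := [set u; v] \in gE G.
Definition subgraph H G := (gV H \subset gV G) /\ (gE H \subset gE G).

Definition is_cycle C := exists s : seq V,
  [/\ 3 <= size s, uniq s, gV C = [set x in s]
    & gE C = [set [set x; next s x] | x in s]].

Definition connected_in H (S : {set V}) := forall a b, a \in S -> b \in S ->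
  exists p : seq V, path [rel x y | (y \in S) && adj H x y] a p && (last a p == b).

Definition grid_adj n (x y : 'I_n * 'I_n) : bool :=
  ((x.1 == y.1) && ((x.2.+1 == y.2) || (y.2.+1 == x.2))) ||
  ((x.2 == y.2) && ((x.1.+1 == y.1) || (y.1.+1 == x.1))).

Definition has_grid_minor H (n : nat) := exists B : 'I_n * 'I_n -> {set V},
  [/\ forall x, B x != finset.set0,
      forall x, B x \subset gV H,
      forall x, connected_in H (B x),
      forall x y, x != y -> [disjoint B x & B y]
    & forall x y, grid_adj x y -> exists a b, [/\ a \in B x, b \in B y & adj H a b]].
End Graphs.

(* ---------- the elementary wall (0-indexed: v_{i+1,j+1} is (i,j)) ---------- *)
Section Wall.
Variables h r : nat.
Definition wvert := ('I_h * 'I_(r.*2))%type.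

(* the h x 2r grid with the vertical edges e^j_i removed when i + j is odd
   (1-indexed), i.e. for even i when j is odd and for odd i when j is even *)
Definition wall0_adj (x y : wvert) : bool :=
  ((x.1 == y.1 :> nat) && ((x.2.+1 == y.2) || (y.2.+1 == x.2))) ||
  ((x.2 == y.2 :> nat) && (((x.1.+1 == y.1) || (y.1.+1 == x.1))
                           && ~~ odd (minn x.1 y.1 + x.2))).
(* then delete the vertices of degree 1 *)
Definition in_wall (x : wvert) : bool := #|[set y | wall0_adj x y]| != 1.
Definition wall_adj (x y : wvert) : bool := [&& wall0_adj x y, in_wall x & in_wall y].
Definition wall_deg (x : wvert) : nat := #|[set y | wall_adj x y]|.
Definition wall_border (x : wvert) : bool :=
  [|| x.1 == 0 :> nat, x.1 == h.-1 :> nat, x.2 == 0 :> nat | x.2 == (r.*2).-1 :> nat].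
Definition wall_peg (x : wvert) : bool := [&& in_wall x, wall_border x & wall_deg x == 2].

(* a subdivision of the elementary wall in G: branch vertices phi, and for each
   wall edge xy a path phi x - P x y - phi y in G (P x y = internal vertices),
   internally disjoint, internal vertices avoiding branch vertices *)
Definition wall_model (V : finType) (G : sgraph V) (phi : wvert -> V)
    (P : wvert -> wvert -> seq V) : Prop :=
  [/\ forall x y, in_wall x -> in_wall y -> phi x = phi y -> x = y,
      forall x, in_wall x -> phi x \in gV G,
      forall x y, wall_adj x y ->
        [/\ path (adj G) (phi x) (rcons (P x y) (phi y)),
            uniq (phi x :: rcons (P x y) (phi y)) & P y x = rev (P x y)],
      forall x y x' y', wall_adj x y -> wall_adj x' y' -> [set x; y] != [set x'; y'] ->
        ~~ has (mem (P x' y')) (P x y)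
    & forall x y z, wall_adj x y -> in_wall z -> phi z \notin P x y].
End Wall.

Section Plane.
Local Open Scope ring_scope.
Variables (V : finType) (R : realType).
Variables (pos : V -> (R * R)%type) (arc : {set V} -> R -> (R * R)%type).

Definition unit_itv (t : R) := (0 <= t) && (t <= 1).

Definition plane_embedding (H : sgraph V) : Prop :=
  [/\ forall x y, x \in gV H -> y \in gV H -> pos x = pos y -> x = y,
      forall e, e \in gE H ->
        [/\ exists u v, e = [set u; v] /\ arc e 0 = pos u /\ arc e 1 = pos v,
            ({within `[0%R, 1%R], continuous (arc e)})%classic,
            forall s t, unit_itv s -> unit_itv t -> arc e s = arc e t -> s = t
          & forall t x, 0 < t < 1 -> x \in gV H -> arc e t <> pos x]
    & forall e e' s t, e \in gE H -> e' \in gE H -> e != e' ->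
        unit_itv s -> unit_itv t -> arc e s = arc e' t -> s = 0 \/ s = 1].

Definition drawing (Vs : {set V}) (Es : {set {set V}}) : set (R * R) :=
  fun p => (exists x, x \in Vs /\ p = pos x) \/
           (exists e, e \in Es /\ exists t, unit_itv t /\ p = arc e t).

Definition face (H : sgraph V) (F : set (R * R)) : Prop :=
  exists p, ~ drawing (gV H) (gE H) p /\ F = connected_component (~` drawing (gV H) (gE H))%classic p.

Definition bounded_set2 (F : set (R * R)) : Prop :=
  exists M : R, forall p, F p -> `|p.1| <= M /\ `|p.2| <= M.

Definition boundary (F : set (R * R)) : set (R * R) := (closure F `\` interior F)%classic.
End Plane.

Definition C_flat_witness (V : finType) (R : realType) (G C : sgraph V) (k : nat)
    (Gs : nat -> sgraph V) (Gt : sgraph V)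
    (pos : V -> (R * R)%type) (arc : {set V} -> R -> (R * R)%type) : Prop :=
  [/\
      wf_graph Gt /\ plane_embedding pos arc Gt,
      (forall i, i <= k -> wf_graph (Gs i)) /\
      gV G = \bigcup_(i < k.+1) gV (Gs i) /\ gE G = \bigcup_(i < k.+1) gE (Gs i) /\
      (forall i j, i <= k -> j <= k -> i != j -> [disjoint gE (Gs i) & gE (Gs j)]),
      subgraph C (Gs 0) /\ subgraph (Gs 0) Gt /\ gV Gt = gV (Gs 0) /\
      (forall F, face pos arc Gt F -> ~ bounded_set2 F ->
         boundary F = drawing pos arc (gV C) (gE C)),
      (forall i, 0 < i <= k ->
        let A := gV (Gs i) :&: gV (Gs 0) in
        [/\ #|A| <= 3,
            forall u v, u != v -> A = [set u; v] -> adj Gt u v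
          & forall u v w, u != v -> v != w -> u != w -> A = [set u; v; w] ->
              exists F, [/\ face pos arc Gt F, bounded_set2 F,
                [&& adj Gt u v, adj Gt v w & adj Gt u w] &
                boundary F = drawing pos arc finset.set0 [set [set u; v]; [set v; w]; [set u; w]]]])
    &
      (forall i j, 0 < i <= k -> 0 < j <= k -> i != j ->
         gV (Gs i) :&: gV (Gs j) \subset gV (Gs 0))].

(* Main.v *)
Require Import Defs.
From HB Require Import structures.
From mathcomp Require Import all_boot all_order all_algebra.
From mathcomp Require Import all_classical all_reals all_analysis.
From mathcomp Require Import zify.
From mathcomp Require Import ssrbool eqtype ssrnat seq path fintype finset.
Set Implicit Arguments. Unset Strict Implicit. Unset Printing Implicit Defensive.
Local Open Scope nat_scope.


Definition relS (V : finType) (H : sgraph V) (S : {set V}) :=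
  [rel x y | (y \in S) && adj H x y].

Lemma adj_sym (V : finType) (H : sgraph V) u v : adj H u v = adj H v u.
Proof. by rewrite /adj setUC. Qed.

Lemma wf_adj (V : finType) (H : sgraph V) u v : wf_graph H -> adj H u v ->
  [/\ u \in gV H, v \in gV H & u != v].
Proof.
move=> wf e; have /andP[c s] := wf _ e.
rewrite cards2 in c; split; first (apply: (subsetP s); by rewrite !inE eqxx).
- apply: (subsetP s); by rewrite !inE eqxx orbT.
- by case: (u != v) c.
Qed.

Record Flat (V : finType) (G Gt : sgraph V) (k : nat) (Gs : nat -> sgraph V) : Prop := {
  fl_wf : forall j, j <= k -> wf_graph (Gs j);
  fl_V : forall v, v \in gV G -> exists2 j, j <= k & v \in gV (Gs j);
  fl_E : forall e, e \in gE G -> exists2 j, j <= k & e \in gE (Gs j);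
  fl_I : forall i j, 0 < i <= k -> 0 < j <= k -> i != j ->
           gV (Gs i) :&: gV (Gs j) \subset gV (Gs 0);
  fl_E0 : gE (Gs 0) \subset gE Gt;
  fl_card : forall i, 0 < i <= k -> #|gV (Gs i) :&: gV (Gs 0)| <= 3;
  fl_cl : forall i, 0 < i <= k -> forall u v, u \in gV (Gs i) -> u \in gV (Gs 0) ->
     v \in gV (Gs i) -> v \in gV (Gs 0) -> u != v -> adj Gt u v }.

Lemma adj_in (V : finType) (H : sgraph V) u v : wf_graph H -> adj H u v ->
  u \in gV H /\ v \in gV H.
Proof. by move=> wf /(wf_adj wf) []. Qed.


Lemma EL (V : finType) (G Gt : sgraph V) k Gs i u y : Flat G Gt k Gs ->
  0 < i <= k -> u \in gV (Gs i) -> u \notin gV (Gs 0) -> adj G u y -> y \in gV (Gs i).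
Proof.
move=> F ik ui u0 e; have [j jk ej] := fl_E F e.
have /andP [_ s] := fl_wf F jk ej.
have uj : u \in gV (Gs j) by apply: (subsetP s); rewrite !inE eqxx.
have yj : y \in gV (Gs j) by apply: (subsetP s); rewrite !inE eqxx orbT.
case: (eqVneq i j) => [-> // | ij].
case: j jk ej uj yj ij s => [|j] jk ej uj yj ij s; first by rewrite uj in u0.
have := fl_I F ik (j:=j.+1) _ ij; rewrite jk => /(_ isT) /subsetP /(_ u).
by rewrite inE ui uj (negbTE u0) => /(_ isT).
Qed.

Lemma EL0 (V : finType) (G Gt : sgraph V) k Gs u y : Flat G Gt k Gs -> wf_graph G ->
  u \in gV (Gs 0) -> y \in gV (Gs 0) -> adj G u y -> adj Gt u y.
Proof.
move=> F wf u0 y0 e; have [_ _ uy] := wf_adj wf e.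
have [j jk ej] := fl_E F e.
have /andP [_ s] := fl_wf F jk ej.
case: j jk ej s => [|j] jk ej s; first by apply: (subsetP (fl_E0 F)).
apply: (fl_cl F (i:=j.+1)) => //; apply: (subsetP s); by rewrite !inE eqxx ?orbT.
Qed.

Lemma VL (V : finType) (G Gt : sgraph V) k Gs u : Flat G Gt k Gs ->
  u \in gV G -> u \notin gV (Gs 0) -> exists2 i, 0 < i <= k & u \in gV (Gs i).
Proof.
move=> F uG u0; have [[|j] jk uj] := fl_V F uG; first by rewrite uj in u0.
by exists j.+1.
Qed.

Lemma WL (V : finType) (G Gt : sgraph V) k Gs i (e : rel V) : Flat G Gt k Gs ->
  (forall x y, e x y -> adj G x y) -> 0 < i <= k ->
  forall p u, u \in gV (Gs i) -> u \notin gV (Gs 0) -> path e u p -> last u p \in gV (Gs 0) ->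
  exists p1 z p2, [/\ p = p1 ++ z :: p2, z \in gV (Gs 0) & z \in gV (Gs i)].
Proof.
move=> F he ik; elim=> [|y p IH] u ui u0 /=; first by rewrite (negbTE u0).
move=> /andP [uy pp] l.
have yi : y \in gV (Gs i) by apply: (EL F ik ui u0 (he _ _ uy)).
case: (boolP (y \in gV (Gs 0))) => y0.
  by exists [::], y, p.
have [p1 [z [p2 [-> z0 zi]]]] := IH y yi y0 pp l.
by exists (y :: p1), z, p2.
Qed.

Lemma WL0 (V : finType) (G Gt : sgraph V) k Gs i (e : rel V) : Flat G Gt k Gs ->
  (forall x y, e x y -> adj G x y) -> 0 < i <= k ->
  forall p u, u \in gV (Gs i) -> u \notin gV (Gs 0) -> path e u p ->
  all (fun x => x \notin gV (Gs 0)) p -> last u p \in gV (Gs i).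
Proof.
move=> F he ik; elim=> [|y p IH] u ui u0 //= /andP [uy pp] /andP [y0 a].
apply: IH => //; exact: (EL F ik ui u0 (he _ _ uy)).
Qed.

Lemma pathS_all (V : finType) (H : sgraph V) S u p :
  path (relS H S) u p -> all (mem S) p.
Proof. by elim: p u => [|y p IH] u //= /andP [/andP [-> _] /IH]. Qed.

Lemma relS_adj (V : finType) (H : sgraph V) S x y : relS H S x y -> adj H x y.
Proof. by case/andP. Qed.

Lemma CT (V : finType) (G Gt : sgraph V) k Gs (S : {set V}) : Flat G Gt k Gs -> wf_graph G ->
  forall n p a, size p <= n -> a \in gV (Gs 0) -> path (relS G S) a p ->
  last a p \in gV (Gs 0) ->
  exists q, path (relS Gt (S :&: gV (Gs 0))) a q && (last a q == last a p).
Proof.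
move=> F wf; elim=> [|n IH] [|y p] a //=; try by move=> *; exists [::]; rewrite /= eqxx.
move=> sp a0 /andP [ya pp] l; have /andP [yS ay] := ya.
case: (boolP (y \in gV (Gs 0))) => y0.
  have [q /andP [q1 q2]] := IH p y sp y0 pp l.
  by exists (y :: q); rewrite /= q1 q2 inE yS y0 (EL0 F wf a0 y0 ay).
have [_ yG _] := wf_adj wf ay.
have [i ik yi] := VL F yG y0.
have ai : a \in gV (Gs i) by rewrite adj_sym in ay; exact: (EL F ik yi y0 ay).
have [p1 [z [p2 [ep z0 zi]]]] := WL F (@relS_adj _ G S) ik yi y0 pp l.
have zS : z \in S.
  by have := pathS_all pp; rewrite ep all_cat /= => /and3P [_ /= ? _].
move: pp l; rewrite ep cat_path last_cat /= => /andP [_ /andP [_ pp2]] l.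
have sp2 : size p2 <= n.
  move: sp; rewrite ep size_cat /= ltnS addnS => sp; exact: leq_trans (leq_addl _ _) (ltnW sp).
have [q /andP [q1 q2]] := IH p2 z sp2 z0 pp2 l.
case: (eqVneq a z) => [az | az].
  by exists q; rewrite az q1 q2.
by exists (z :: q); rewrite /= q1 q2 inE zS z0 (fl_cl F ik ai a0 zi z0 az).
Qed.

Lemma conn_tr (V : finType) (G Gt : sgraph V) k Gs (X : {set V}) : Flat G Gt k Gs -> wf_graph G ->
  connected_in G X -> connected_in Gt (X :&: gV (Gs 0)).
Proof.
move=> F wf cX a b; rewrite !inE => /andP [aX a0] /andP [bX b0].
have [p /andP [pp /eqP lp]] := cX a b aX bX.
have [|q /andP [q1 q2]] := CT F wf (leqnn (size p)) a0 (pp : path (relS G X) a p).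
  by rewrite lp.
by exists q; apply/andP; split; [exact: q1 | rewrite (eqP q2) lp].
Qed.

Lemma H1 (V : finType) (G Gt : sgraph V) k Gs (X : {set V}) i x : Flat G Gt k Gs ->
  connected_in G X -> 0 < i <= k -> x \in X -> x \notin gV (Gs 0) -> x \in gV (Gs i) ->
  (exists a0, a0 \in X :&: gV (Gs 0)) ->
  exists2 a, a \in X :&: gV (Gs 0) & a \in gV (Gs i).
Proof.
move=> F cX ik xX x0 xi [a0]; rewrite inE => /andP [a0X a00].
have [p /andP [pp /eqP lp]] := cX x a0 xX a0X.
have pp' : path (relS G X) x p by [].
have [p1 [z [p2 [ep z0 zi]]]] := WL F (@relS_adj _ G X) ik xi x0 pp' (eq_ind_r (fun v => v \in gV (Gs 0)) a00 lp).
exists z => //; rewrite inE z0 andbT.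
by have := pathS_all pp'; rewrite ep all_cat /= => /and3P [_ ? _].
Qed.

Lemma AT1 (V : finType) (G Gt : sgraph V) k Gs (X Y : {set V}) x y : Flat G Gt k Gs ->
  wf_graph G -> [disjoint X & Y] -> connected_in G X -> connected_in G Y ->
  (exists a0, a0 \in X :&: gV (Gs 0)) -> (exists b0, b0 \in Y :&: gV (Gs 0)) ->
  x \in X -> y \in Y -> adj G x y -> x \notin gV (Gs 0) ->
  exists a b, [/\ a \in X :&: gV (Gs 0), b \in Y :&: gV (Gs 0) & adj Gt a b].
Proof.
move=> F wf dXY cX cY eX eY xX yY xy x0.
have [xG _ _] := wf_adj wf xy.
have [i ik xi] := VL F xG x0.
have yi := EL F ik xi x0 xy.
have [a aX ai] := H1 F cX ik xX x0 xi eX.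
have [b bY bi] : exists2 b, b \in Y :&: gV (Gs 0) & b \in gV (Gs i).
  case: (boolP (y \in gV (Gs 0))) => y0; first by exists y; rewrite // inE yY y0.
  exact: (H1 F cY ik yY y0 yi eY).
exists a, b; split => //.
have ab : a != b.
  apply/eqP => eab; move: aX bY; rewrite !inE eab => /andP [bX _] /andP [bY _].
  by rewrite (disjointFr dXY bX) in bY.
move: aX bY; rewrite !inE => /andP [_ a0] /andP [_ b0].
exact: (fl_cl F ik ai a0 bi b0 ab).
Qed.

Lemma AT (V : finType) (G Gt : sgraph V) k Gs (X Y : {set V}) x y : Flat G Gt k Gs ->
  wf_graph G -> [disjoint X & Y] -> connected_in G X -> connected_in G Y ->
  (exists a0, a0 \in X :&: gV (Gs 0)) -> (exists b0, b0 \in Y :&: gV (Gs 0)) ->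
  x \in X -> y \in Y -> adj G x y ->
  exists a b, [/\ a \in X :&: gV (Gs 0), b \in Y :&: gV (Gs 0) & adj Gt a b].
Proof.
move=> F wf dXY cX cY eX eY xX yY xy.
case: (boolP (x \in gV (Gs 0))) => x0.
  case: (boolP (y \in gV (Gs 0))) => y0.
    exists x, y; split; rewrite ?inE ?xX ?yY ?x0 ?y0 //; exact: (EL0 F wf x0 y0 xy).
  rewrite adj_sym in xy.
  have [b [a [bY aX ab]]] := AT1 F wf (etrans (esym (disjoint_sym X Y)) dXY) cY cX eY eX yY xX xy y0.
  by exists a, b; split; rewrite // adj_sym.
have [a [b [aX bY ab]]] := AT1 F wf dXY cX cY eX eY xX yY xy x0.
by exists a, b.
Qed.

Lemma NE (V : finType) (G Gt : sgraph V) k Gs (X : {set V}) s1 s2 s3 s4 p1 p2 p3 p4 :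
  Flat G Gt k Gs -> wf_graph G -> connected_in G X -> X \subset gV G ->
  s1 \in X -> s2 \in X -> s3 \in X -> s4 \in X ->
  path (adj G) s1 p1 -> path (adj G) s2 p2 -> path (adj G) s3 p3 -> path (adj G) s4 p4 ->
  last s1 p1 \in gV (Gs 0) -> last s2 p2 \in gV (Gs 0) ->
  last s3 p3 \in gV (Gs 0) -> last s4 p4 \in gV (Gs 0) ->
  (forall v, v \in p1 -> v \in p2 -> False) -> (forall v, v \in p1 -> v \in p3 -> False) ->
  (forall v, v \in p1 -> v \in p4 -> False) -> (forall v, v \in p2 -> v \in p3 -> False) ->
  (forall v, v \in p2 -> v \in p4 -> False) -> (forall v, v \in p3 -> v \in p4 -> False) ->
  exists v, v \in X :&: gV (Gs 0).
Proof.
move=> F wf cX XG s1X s2X s3X s4X pp1 pp2 pp3 pp4 l1 l2 l3 l4 d12 d13 d14 d23 d24 d34.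
case: (set_0Vmem (X :&: gV (Gs 0))) => [e0|[v vX]]; last by exists v.
have nX : forall v, v \in X -> v \notin gV (Gs 0).
  by move=> v vX; apply/negP => v0; have := in_set0 v; rewrite -e0 inE vX v0.
have [i ik s1i] := VL F (subsetP XG _ s1X) (nX _ s1X).
have siX : forall s, s \in X -> s \in gV (Gs i).
  move=> s sX; have [p /andP [pp /eqP lp]] := cX s1 s s1X sX.
  rewrite -lp; apply: (WL0 F (@relS_adj _ G X) ik s1i (nX _ s1X) (pp : path (relS G X) s1 p)).
  by apply/allP => v vp; apply: nX; have /allP := pathS_all (pp : path (relS G X) s1 p); apply.
have get : forall s p, s \in X -> path (adj G) s p -> last s p \in gV (Gs 0) ->
    exists2 z, z \in p & z \in gV (Gs i) :&: gV (Gs 0).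
  move=> s p sX pp l.
  have [q1 [z [q2 [ep z0 zi]]]] := WL F (fun x y (h : adj G x y) => h) ik (siX _ sX) (nX _ sX) pp l.
  by exists z; rewrite ?ep ?mem_cat ?inE ?eqxx ?orbT // zi z0.
have [z1 z1p z1A] := get _ _ s1X pp1 l1.
have [z2 z2p z2A] := get _ _ s2X pp2 l2.
have [z3 z3p z3A] := get _ _ s3X pp3 l3.
have [z4 z4p z4A] := get _ _ s4X pp4 l4.
have neq : forall a b (pa pb : seq V), a \in pa -> b \in pb ->
    (forall v, v \in pa -> v \in pb -> False) -> a != b.
  by move=> a b pa pb ap bp d; apply/eqP => eab; apply: (d a) => //; rewrite eab.
have u : uniq [:: z1; z2; z3; z4].
  rewrite /= !inE !negb_or (neq _ _ _ _ z1p z2p d12) (neq _ _ _ _ z1p z3p d13).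
  by rewrite (neq _ _ _ _ z1p z4p d14) (neq _ _ _ _ z2p z3p d23) (neq _ _ _ _ z2p z4p d24) (neq _ _ _ _ z3p z4p d34).
have sub : [:: z1; z2; z3; z4] \subset gV (Gs i) :&: gV (Gs 0).
  by apply/subsetP => v; move: z1A z2A z3A z4A; rewrite !inE => h1 h2 h3 h4 /or4P [] /eqP ->.
have h := subset_leq_card sub; rewrite (card_uniqP u) in h.
by have := leq_trans h (fl_card F ik).
Qed.

Lemma Flat_of (V : finType) (R : realType) (G C : sgraph V) k Gs Gt (pos : V -> (R * R)%type) (arc : {set V} -> R -> (R * R)%type) :
  C_flat_witness G C k Gs Gt pos arc -> Flat G Gt k Gs.
Proof.
case=> _ [wfs [VG [EG _]]] [_ [[_ sE] _]] att ov.
split => //.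
- move=> v; rewrite VG => /bigcupP [i _ vi]; exists (val i) => //.
  by have := ltn_ord i.
- move=> e; rewrite EG => /bigcupP [i _ vi]; exists (val i) => //.
  by have := ltn_ord i.
- by move=> i /att [].
- move=> i ik u v ui u0 vi v0 uv.
  have [c2 c3 c4] := att i ik.
  set A := gV (Gs i) :&: gV (Gs 0) in c2 c3 c4.
  have uA : u \in A by rewrite inE ui u0.
  have vA : v \in A by rewrite inE vi v0.
  have sA : [set u; v] \subset A by apply/subsetP => x; rewrite !inE => /orP [] /eqP ->; rewrite -in_setI.
  have c2' : #|[set u; v]| = 2 by rewrite cards2 uv.
  case: (leqP #|A| 2) => cA.
    apply: c3 => //; apply/eqP; rewrite eq_sym eqEcard sA c2' cA //.
  have : ~~ (A \subset [set u; v]) by apply/negP => /subset_leq_card; rewrite c2' => h; have := leq_ltn_trans h cA; rewrite ltnn.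
  case/subsetPn => x xA xuv.
  move: xuv; rewrite !inE negb_or => /andP [xu xv].
  have sA3 : [set u; v; x] \subset A by apply/subsetP => y; rewrite !inE => /orP [/orP [] | ] /eqP ->; rewrite -in_setI.
  have c3' : #|[set u; v; x]| = 3.
    by rewrite setUC cardsU1 cards2 !inE negb_or xu xv uv.
  have eA : A = [set u; v; x].
    apply/eqP; rewrite eq_sym eqEcard sA3 c3'; exact: c2.
  have vx : v != x by rewrite eq_sym.
  have ux : u != x by rewrite eq_sym.
  by have [Fc [_ _ /and3P [h _ _] _]] := c4 u v x uv vx ux eA.
Qed.


Definition W0 (xi xj yi yj : nat) : bool :=
  ((xi == yi) && ((xj.+1 == yj) || (yj.+1 == xj))) ||
  ((xj == yj) && (((xi.+1 == yi) || (yi.+1 == xi)) && ~~ odd (minn xi yi + xj))).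

Definition mk (w : nat) (x0 : wvert w w) (i j : nat) : wvert w w :=
  (insubd x0.1 i, insubd x0.2 j).

Lemma mk1 w (x0 : wvert w w) i j : i < w -> ((mk x0 i j).1 : nat) = i.
Proof. by move=> h; rewrite /= val_insubd h. Qed.

Lemma mk2 w (x0 : wvert w w) i j : j < w.*2 -> ((mk x0 i j).2 : nat) = j.
Proof. by move=> h; rewrite /= val_insubd h. Qed.

Lemma mk_eq w (x0 : wvert w w) (y : wvert w w) i j :
  (y.1 : nat) = i -> (y.2 : nat) = j -> y = mk x0 i j.
Proof.
case: y => a b /= ea eb; rewrite /mk; congr pair; apply: val_inj;
  by rewrite val_insubd ?ea ?eb -?ea -?eb ltn_ord.
Qed.

Lemma mk_inj w (x0 : wvert w w) i j i' j' : i < w -> j < w.*2 -> i' < w -> j' < w.*2 ->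
  mk x0 i j = mk x0 i' j' -> i = i' /\ j = j'.
Proof.
move=> h1 h2 h3 h4 e; split.
  by rewrite -(mk1 x0 j h1) -(mk1 x0 j' h3) e.
by rewrite -(mk2 x0 i h2) -(mk2 x0 i' h4) e.
Qed.

Lemma wall0_mk w (x0 : wvert w w) i j i' j' : i < w -> j < w.*2 -> i' < w -> j' < w.*2 ->
  wall0_adj (mk x0 i j) (mk x0 i' j') = W0 i j i' j'.
Proof. by move=> *; rewrite /wall0_adj /W0 !mk1 ?mk2. Qed.

Lemma wall0_sym w (x y : wvert w w) : wall0_adj x y = wall0_adj y x.
Proof.
rewrite /wall0_adj; case: x y => [[a ha] [b hb]] [[c hc] [d hd]] /=.
apply/idP/idP; lia.
Qed.

Lemma in_wall2 w (x y1 y2 : wvert w w) : wall0_adj x y1 -> wall0_adj x y2 -> y1 != y2 ->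
  in_wall x.
Proof.
move=> a1 a2 ne; rewrite /in_wall.
have s : [set y1; y2] \subset [set y | wall0_adj x y].
  by apply/subsetP => y; rewrite !inE => /orP [] /eqP ->.
have := subset_leq_card s; rewrite cards2 ne; lia.
Qed.

Lemma in_wall_of w (x0 : wvert w w) i j i1 j1 i2 j2 :
  i < w -> j < w.*2 -> i1 < w -> j1 < w.*2 -> i2 < w -> j2 < w.*2 ->
  W0 i j i1 j1 -> W0 i j i2 j2 -> (i1 != i2) || (j1 != j2) -> in_wall (mk x0 i j).
Proof.
move=> h1 h2 h3 h4 h5 h6 a1 a2 ne.
apply: (@in_wall2 w _ (mk x0 i1 j1) (mk x0 i2 j2)); rewrite ?wall0_mk //.
apply/eqP => /mk_inj; move: ne; lia.
Qed.

Lemma in_wall_int w (x0 : wvert w w) i j : i < w -> j < w.*2 ->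
  ((0 < j) && (j.+1 < w.*2)) || ((0 < i) && (i.+1 < w)) -> in_wall (mk x0 i j).
Proof.
move=> hi hj /orP [h | h].
  by apply: (@in_wall_of w x0 i j (i) (j.-1) (i) (j.+1)); rewrite /W0; lia.
case: (posnP j) => j0; case: (boolP (odd (i + j))) => o.
- by apply: (@in_wall_of w x0 i j (i) (j.+1) (i.-1) (j)); rewrite /W0; lia.
- by apply: (@in_wall_of w x0 i j (i) (j.+1) (i.+1) (j)); rewrite /W0; lia.
- by apply: (@in_wall_of w x0 i j (i) (j.-1) (i.-1) (j)); rewrite /W0; lia.
- by apply: (@in_wall_of w x0 i j (i) (j.-1) (i.+1) (j)); rewrite /W0; lia.
Qed.

Lemma wall_adj_of w (x0 : wvert w w) i j i' j' : i < w -> j < w.*2 -> i' < w -> j' < w.*2 ->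
  W0 i j i' j' -> in_wall (mk x0 i j) -> in_wall (mk x0 i' j') ->
  wall_adj (mk x0 i j) (mk x0 i' j').
Proof. by move=> *; rewrite /wall_adj wall0_mk // ; apply/and3P. Qed.

Lemma deg2 w (x0 : wvert w w) i j i1 j1 i2 j2 :
  i < w -> j < w.*2 -> i1 < w -> j1 < w.*2 -> i2 < w -> j2 < w.*2 ->
  in_wall (mk x0 i j) -> in_wall (mk x0 i1 j1) -> in_wall (mk x0 i2 j2) ->
  W0 i j i1 j1 -> W0 i j i2 j2 -> (i1 != i2) || (j1 != j2) ->
  (forall i' j', i' < w -> j' < w.*2 -> W0 i j i' j' ->
     (i' = i1 /\ j' = j1) \/ (i' = i2 /\ j' = j2)) ->
  wall_deg (mk x0 i j) = 2.
Proof.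
move=> h1 h2 h3 h4 h5 h6 w0 w1 w2 a1 a2 ne all.
rewrite /wall_deg.
have -> : [set y | wall_adj (mk x0 i j) y] = [set mk x0 i1 j1; mk x0 i2 j2].
  apply/setP => -[a b]; rewrite !inE /wall_adj w0 /=.
  have ey := mk_eq x0 (y := (a, b)) (erefl (a : nat)) (erefl (b : nat)).
  rewrite ey (wall0_mk x0 h1 h2 (ltn_ord a) (ltn_ord b)).
  apply/idP/idP.
    case/andP => /(all _ _ (ltn_ord _) (ltn_ord _)) [[-> ->] | [-> ->]]; by rewrite eqxx ?orbT.
  case/orP => /eqP e.
    by have [-> ->] := mk_inj (ltn_ord a) (ltn_ord b) h3 h4 e; rewrite a1 w1.
  by have [-> ->] := mk_inj (ltn_ord a) (ltn_ord b) h5 h6 e; rewrite a2 w2.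
rewrite cards2; case: eqP => // /mk_inj; move: ne; move=> ne H; have := H h3 h4 h5 h6; lia.
Qed.

Lemma peg_of w (x0 : wvert w w) i j :
  i < w -> j < w.*2 -> in_wall (mk x0 i j) ->
  [|| i == 0, i == w.-1, j == 0 | j == (w.*2).-1] ->
  wall_deg (mk x0 i j) = 2 -> wall_peg (mk x0 i j).
Proof.
move=> h1 h2 iw b d; rewrite /wall_peg iw d eqxx andbT /=.
by rewrite /wall_border mk1 ?mk2.
Qed.


Fixpoint expw (V : finType) w (phi : wvert w w -> V) (P : wvert w w -> wvert w w -> seq V)
  (x : wvert w w) (xs : seq (wvert w w)) : seq V :=
  match xs with
  | [::] => [::]
  | y :: ys => rcons (P x y) (phi y) ++ expw phi P y ys
  end.

Lemma E1 (V : finType) (G : sgraph V) w phi P (x : wvert w w) xs :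
  wall_model G phi P -> path (@wall_adj w w) x xs -> path (adj G) (phi x) (expw phi P x xs).
Proof.
move=> [_ _ M3 _ _]; elim: xs x => [|y ys IH] x //= /andP [xy pp].
rewrite cat_path last_rcons IH // andbT.
by have [] := M3 _ _ xy.
Qed.

Lemma E2 (V : finType) w phi P (x : wvert w w) xs :
  last (phi x) (expw (V:=V) phi P x xs) = phi (last x xs).
Proof. by elim: xs x => [|y ys IH] x //=; rewrite last_cat last_rcons IH. Qed.

Lemma E3 (V : finType) w phi P (x : wvert w w) xs v :
  v \in expw (V:=V) phi P x xs ->
  (exists2 z, z \in xs & v = phi z) \/
  (exists y z, (y, z) \in zip (x :: xs) xs /\ v \in P y z).
Proof.
elim: xs x => [|y ys IH] x //=; rewrite mem_cat mem_rcons inE -orbA.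
case/or3P => [/eqP -> | h | /IH [[z zy ->] | [y' [z [h1 h2]]]]].
- by left; exists y; rewrite ?inE ?eqxx.
- by right; exists x, y; rewrite inE eqxx.
- by left; exists z; rewrite // inE zy orbT.
- by right; exists y', z; rewrite inE h1 orbT.
Qed.

Lemma zipP w (x : wvert w w) xs y z : path (@wall_adj w w) x xs ->
  (y, z) \in zip (x :: xs) xs -> [/\ wall_adj y z, y \in x :: xs & z \in xs].
Proof.
elim: xs x => [|u us IH] x //= /andP [xu pp]; rewrite inE => /orP [/eqP [-> ->] | h].
  by rewrite !inE !eqxx ?orbT.
have [h1 h2 h3] := IH u pp h; split => //; rewrite inE ?h2 ?h3 ?orbT //.
Qed.

Lemma wall_adj_in w (x y : wvert w w) : wall_adj x y -> in_wall x /\ in_wall y.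
Proof. by case/and3P. Qed.

Lemma path_inw w (x : wvert w w) xs z : path (@wall_adj w w) x xs -> z \in xs -> in_wall z.
Proof.
elim: xs x => [|u us IH] x //= /andP [xu pp]; rewrite inE => /orP [/eqP -> | zs]; last exact: IH pp zs.
by have [] := wall_adj_in xu.
Qed.

Lemma set2_eq (T : finType) (a b c d : T) : [set a; b] = [set c; d] ->
  (a = c /\ b = d) \/ (a = d /\ b = c).
Proof.
move=> e.
have : a \in [set c; d] by rewrite -e !inE eqxx.
have : b \in [set c; d] by rewrite -e !inE eqxx orbT.
have : c \in [set a; b] by rewrite e !inE eqxx.
have : d \in [set a; b] by rewrite e !inE eqxx orbT.
rewrite !inE.
move=> /orP[/eqP h1|/eqP h1] /orP[/eqP h2|/eqP h2] /orP[/eqP h3|/eqP h3] /orP[/eqP h4|/eqP h4]; subst; auto.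
Qed.

Lemma DL (V : finType) (G : sgraph V) w phi P (s1 s2 : wvert w w) xs1 xs2 v :
  wall_model G phi P -> path (@wall_adj w w) s1 xs1 -> path (@wall_adj w w) s2 xs2 ->
  (forall z, z \in xs1 -> z \in xs2 -> False) -> s1 \notin xs2 -> s2 \notin xs1 ->
  v \in expw phi P s1 xs1 -> v \in expw phi P s2 xs2 -> False.
Proof.
move=> M p1 p2 d n1 n2; case: (M) => M1 _ _ M4 M5.
case/E3 => [[z1 z1x ->] | [y1 [z1 [h1 e1]]]]; case/E3 => [[z2 z2x e2] | [y2 [z2 [h2 e2]]]].
- have ez := M1 _ _ (path_inw p1 z1x) (path_inw p2 z2x) e2.
  by apply: (d z1 z1x); rewrite ez.
- have [a2 _ _] := zipP p2 h2.
  by rewrite (negbTE (M5 _ _ _ a2 (path_inw p1 z1x))) in e2.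
- have [a1 _ _] := zipP p1 h1.
  by rewrite e2 (negbTE (M5 _ _ _ a1 (path_inw p2 z2x))) in e1.
- have [a1 y1x z1x] := zipP p1 h1; have [a2 y2x z2x] := zipP p2 h2.
  case: (eqVneq [set y1; z1] [set y2; z2]) => [eq | ne].
    case/set2_eq: eq => [[_ ez] | [_ ez]].
      by apply: (d z1) => //; rewrite ez.
    move: y2x; rewrite inE -ez => /orP [/eqP ez1 | zx2].
      by move: n2; rewrite -ez1 z1x.
    exact: (d z1).
  by have /hasP := M4 _ _ _ _ a1 a2 ne; apply; exists v.
Qed.

Lemma path_inG (V : finType) (G : sgraph V) u p v : wf_graph G -> path (adj G) u p ->
  v \in p -> v \in gV G.
Proof.
move=> wf; elim: p u => [|y p IH] u //= /andP [uy pp]; rewrite inE => /orP [/eqP -> | vp]; last exact: IH pp vp.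
by have [] := wf_adj wf uy.
Qed.


Definition ca (b i : nat) := if odd i then b.*2.+3 else b.*2.+2.
Definition co (b i : nat) := if odd i then b.*2.+2 else b.*2.+3.

Lemma co_ca b j : co b j = ca b j.+1.
Proof. by rewrite /co /ca /=; case: (odd j). Qed.

Lemma co_S b j : co b j.+1 = ca b j.
Proof. by rewrite /co /ca /=; case: (odd j). Qed.

Lemma ca_cases b j : (ca b j = b.*2.+2 /\ ~~ odd j) \/ (ca b j = b.*2.+3 /\ odd j).
Proof. by rewrite /ca; case: (odd j); auto. Qed.

Lemma co_cases b j : (co b j = b.*2.+3 /\ ~~ odd j) \/ (co b j = b.*2.+2 /\ odd j).
Proof. by rewrite /co; case: (odd j); auto. Qed.

Fixpoint lft w (x0 : wvert w w) r c : seq (wvert w w) :=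
  match c with 0 => [::] | c'.+1 => mk x0 r c' :: lft x0 r c' end.
Fixpoint rgt w (x0 : wvert w w) r c m : seq (wvert w w) :=
  match m with 0 => [::] | m'.+1 => mk x0 r c.+1 :: rgt x0 r c.+1 m' end.
Fixpoint upa w (x0 : wvert w w) b i : seq (wvert w w) :=
  match i with 0 => [::] | i'.+1 => mk x0 i' (ca b i') :: mk x0 i' (co b i') :: upa x0 b i' end.
Fixpoint dna w (x0 : wvert w w) b j m : seq (wvert w w) :=
  match m with 0 => [::]
  | m'.+1 => mk x0 j.+1 (ca b j) :: mk x0 j.+1 (co b j) :: dna x0 b j.+1 m' end.

Lemma lft_path w (x0 : wvert w w) r c : 0 < r -> r.+1 < w -> c < w.*2 ->
  path (@wall_adj w w) (mk x0 r c) (lft x0 r c).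
Proof.
move=> h1 h2; elim: c => [|c IH] h3 //=; rewrite IH ?andbT; last lia.
apply: wall_adj_of; rewrite /W0; try lia; apply: in_wall_int; lia.
Qed.

Lemma lft_last w (x0 : wvert w w) r c : 0 < c -> last (mk x0 r c) (lft x0 r c) = mk x0 r 0.
Proof. by elim: c => [|[|c] IH] //= _; rewrite IH. Qed.

Lemma lft_mem w (x0 : wvert w w) r c z : z \in lft x0 r c -> exists2 j, j < c & z = mk x0 r j.
Proof.
elim: c => [|c IH] //=; rewrite inE => /orP [/eqP -> | /IH [j jc ->]]; first by exists c.
by exists j => //; lia.
Qed.

Lemma rgt_path w (x0 : wvert w w) r c m : 0 < r -> r.+1 < w -> c + m < w.*2 ->
  path (@wall_adj w w) (mk x0 r c) (rgt x0 r c m).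
Proof.
move=> h1 h2; elim: m c => [|m IH] c h3 //=; rewrite IH ?andbT; last lia.
apply: wall_adj_of; rewrite /W0; try lia; apply: in_wall_int; lia.
Qed.

Lemma rgt_last w (x0 : wvert w w) r c m : last (mk x0 r c) (rgt x0 r c m) = mk x0 r (c + m).
Proof. by elim: m c => [|m IH] c /=; rewrite ?addn0 // IH addSnnS. Qed.

Lemma rgt_mem w (x0 : wvert w w) r c m z : z \in rgt x0 r c m ->
  exists j, [/\ c < j, j <= c + m & z = mk x0 r j].
Proof.
elim: m c => [|m IH] c //=; rewrite inE => /orP [/eqP -> | /IH [j [h1 h2 ->]]].
  by exists c.+1; split => //; lia.
by exists j; split => //; lia.
Qed.

Lemma upa_path w (x0 : wvert w w) b i : b.+3 <= w -> i < w ->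
  path (@wall_adj w w) (mk x0 i (co b i)) (upa x0 b i).
Proof.
move=> hb; elim: i => [|i IH] hi //=; rewrite IH ?andbT; last lia.
rewrite co_S.
have [[e o] | [e o]] := ca_cases b i; rewrite e; have [[e' o'] | [e' o']] := co_cases b i; rewrite e';
  (apply/andP; split; [apply: wall_adj_of; rewrite /W0; try lia; apply: in_wall_int; lia |]);
  (apply: wall_adj_of; rewrite /W0; try lia; apply: in_wall_int; lia).
Qed.

Lemma upa_last w (x0 : wvert w w) b i : 0 < i -> last (mk x0 i (co b i)) (upa x0 b i) = mk x0 0 (co b 0).
Proof. by elim: i => [|[|i] IH] //= _; rewrite IH. Qed.

Lemma upa_mem w (x0 : wvert w w) b i z : z \in upa x0 b i ->
  exists i' j, [/\ i' < i, (j = b.*2.+2) \/ (j = b.*2.+3) & z = mk x0 i' j].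
Proof.
elim: i => [|i IH] //=; rewrite !inE => /orP [/eqP -> | /orP [/eqP -> | /IH [i' [j [h1 h2 ->]]]]].
- exists i, (ca b i); split => //; have := ca_cases b i; tauto.
- exists i, (co b i); split => //; have := co_cases b i; tauto.
- by exists i', j; split => //; lia.
Qed.

Lemma dna_path w (x0 : wvert w w) b j m : b.+3 <= w -> j + m < w ->
  path (@wall_adj w w) (mk x0 j (ca b j)) (dna x0 b j m).
Proof.
move=> hb; elim: m j => [|m IH] j hj //=; rewrite co_ca IH ?andbT; last lia.
rewrite -co_ca.
have [[e o] | [e o]] := ca_cases b j; rewrite e; have [[e' o'] | [e' o']] := co_cases b j; rewrite e';
  (apply/andP; split; [apply: wall_adj_of; rewrite /W0; try lia; apply: in_wall_int; lia |]);
  (apply: wall_adj_of; rewrite /W0; try lia; apply: in_wall_int; lia).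
Qed.

Lemma dna_last w (x0 : wvert w w) b j m :
  last (mk x0 j (ca b j)) (dna x0 b j m.+1) = mk x0 (j + m.+1) (co b (j + m)).
Proof.
elim: m j => [|m IH] j; first by rewrite /= addn0 addn1.
have -> : last (mk x0 j (ca b j)) (dna x0 b j m.+2) = last (mk x0 j.+1 (co b j)) (dna x0 b j.+1 m.+1) by [].
rewrite co_ca IH; f_equal; [lia | f_equal; lia].
Qed.

Lemma dna_mem w (x0 : wvert w w) b j m z : z \in dna x0 b j m ->
  exists i c, [/\ j < i, i <= j + m, (c = b.*2.+2) \/ (c = b.*2.+3) & z = mk x0 i c].
Proof.
elim: m j => [|m IH] j //=; rewrite !inE => /orP [/eqP -> | /orP [/eqP -> | /IH [i [c [h1 h2 h3 ->]]]]].
- exists j.+1, (ca b j); split => //; try lia; have := ca_cases b j; tauto.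
- exists j.+1, (co b j); split => //; try lia; have := co_cases b j; tauto.
- by exists i, c; split => //; lia.
Qed.


Ltac wl := rewrite /W0; lia.

Lemma peg_left w (x0 : wvert w w) r : 0 < r -> r.+1 < w -> wall_peg (mk x0 r 0).
Proof.
move=> h1 h2.
have i0 : in_wall (mk x0 r 0) by apply: in_wall_int; lia.
have i1 : in_wall (mk x0 r 1) by apply: in_wall_int; lia.
apply: peg_of => //; try lia.
case: (boolP (odd r)) => o.
  have i2 : in_wall (mk x0 r.-1 0).
    by apply: (@in_wall_of w x0 r.-1 0 r.-1 1 r 0); try wl.
  by apply: (@deg2 w x0 r 0 r 1 r.-1 0) => //; try wl; move=> i' j' *; wl.
have i2 : in_wall (mk x0 r.+1 0).
  by apply: (@in_wall_of w x0 r.+1 0 r.+1 1 r 0); try wl.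
by apply: (@deg2 w x0 r 0 r 1 r.+1 0) => //; try wl; move=> i' j' *; wl.
Qed.

Lemma peg_right w (x0 : wvert w w) r : 0 < r -> r.+1 < w -> wall_peg (mk x0 r (w.*2).-1).
Proof.
move=> h1 h2.
have i0 : in_wall (mk x0 r (w.*2).-1) by apply: in_wall_int; lia.
have i1 : in_wall (mk x0 r (w.*2).-2) by apply: in_wall_int; lia.
apply: peg_of => //; try lia.
case: (boolP (odd r)) => o.
  have i2 : in_wall (mk x0 r.+1 (w.*2).-1).
    by apply: (@in_wall_of w x0 r.+1 (w.*2).-1 r.+1 (w.*2).-2 r (w.*2).-1); try wl.
  by apply: (@deg2 w x0 r (w.*2).-1 r (w.*2).-2 r.+1 (w.*2).-1) => //; try wl; move=> i' j' *; wl.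
have i2 : in_wall (mk x0 r.-1 (w.*2).-1).
  by apply: (@in_wall_of w x0 r.-1 (w.*2).-1 r.-1 (w.*2).-2 r (w.*2).-1); try wl.
by apply: (@deg2 w x0 r (w.*2).-1 r (w.*2).-2 r.-1 (w.*2).-1) => //; try wl; move=> i' j' *; wl.
Qed.

Lemma peg_top w (x0 : wvert w w) b : b.+3 <= w -> wall_peg (mk x0 0 b.*2.+3).
Proof.
move=> hb.
have i0 : in_wall (mk x0 0 b.*2.+3) by apply: in_wall_int; lia.
have i1 : in_wall (mk x0 0 b.*2.+2) by apply: in_wall_int; lia.
have i2 : in_wall (mk x0 0 b.*2.+4) by apply: in_wall_int; lia.
apply: peg_of => //; try lia.
by apply: (@deg2 w x0 0 b.*2.+3 0 b.*2.+2 0 b.*2.+4) => //; try wl; move=> i' j' *; wl.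
Qed.

Lemma peg_bot w (x0 : wvert w w) b : b.+3 <= w -> wall_peg (mk x0 w.-1 (co b w.-2)).
Proof.
move=> hb.
have [[e o] | [e o]] := co_cases b w.-2; rewrite e.
  have i0 : in_wall (mk x0 w.-1 b.*2.+3) by apply: in_wall_int; lia.
  have i1 : in_wall (mk x0 w.-1 b.*2.+2) by apply: in_wall_int; lia.
  have i2 : in_wall (mk x0 w.-1 b.*2.+4) by apply: in_wall_int; lia.
  apply: peg_of => //; try lia.
  by apply: (@deg2 w x0 w.-1 b.*2.+3 w.-1 b.*2.+2 w.-1 b.*2.+4) => //; try wl; move=> i' j' *; wl.
have i0 : in_wall (mk x0 w.-1 b.*2.+2) by apply: in_wall_int; lia.
have i1 : in_wall (mk x0 w.-1 b.*2.+1) by apply: in_wall_int; lia.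
have i2 : in_wall (mk x0 w.-1 b.*2.+3) by apply: in_wall_int; lia.
apply: peg_of => //; try lia.
by apply: (@deg2 w x0 w.-1 b.*2.+2 w.-1 b.*2.+1 w.-1 b.*2.+3) => //; try wl; move=> i' j' *; wl.
Qed.


Definition reach (V : finType) (H : sgraph V) (S : {set V}) u v :=
  exists p, path (relS H S) u p && (last u p == v).

Lemma pathS_iff (V : finType) (H : sgraph V) (S : {set V}) u p :
  path (relS H S) u p = path (adj H) u p && all (mem S) p.
Proof.
elim: p u => [|y p IH] u //=; rewrite IH /=.
by case: (y \in S); case: (adj H u y); rewrite ?andbF.
Qed.

Lemma reach_refl (V : finType) (H : sgraph V) (S : {set V}) u : reach H S u u.
Proof. by exists [::]; rewrite /= eqxx. Qed.

Lemma reach_trans (V : finType) (H : sgraph V) (S : {set V}) u v x :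
  reach H S u v -> reach H S v x -> reach H S u x.
Proof.
move=> [p /andP [pp /eqP lp]] [q /andP [qq /eqP lq]].
by exists (p ++ q); rewrite cat_path last_cat lp pp qq lq eqxx.
Qed.

Lemma reach_sym (V : finType) (H : sgraph V) (S : {set V}) u v : u \in S -> reach H S u v -> reach H S v u.
Proof.
move=> uS [p /andP [pp /eqP lp]]; rewrite pathS_iff in pp; case/andP: pp => pa ps.
exists (rev (belast u p)); rewrite -lp pathS_iff rev_path -andbA; apply/and3P; split.
- by rewrite (eq_path (e' := adj H)) // => x y /=; rewrite adj_sym.
- rewrite all_rev; apply/allP => x /mem_belast; rewrite inE => /orP [/eqP -> // |].
  by move/allP: ps => h /h.
- by case: p {pa ps lp} => [|y p] //=; rewrite rev_cons last_rcons.
Qed.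

Lemma conn_of_root (V : finType) (H : sgraph V) (S : {set V}) r : r \in S ->
  (forall v, v \in S -> reach H S r v) -> connected_in H S.
Proof.
move=> rS h a b aS bS.
have [p pp] := reach_trans (reach_sym rS (h a aS)) (h b bS).
by exists p.
Qed.

Lemma reach_pref (V : finType) (H : sgraph V) (S : {set V}) u q v :
  path (adj H) u q -> {subset q <= S} -> v \in q -> reach H S u v.
Proof.
move=> pq sq vq.
have hi : index v q < size q by rewrite index_mem.
have ht : all (mem S) (take (index v q).+1 q) by apply/allP => x /mem_take /sq.
exists (take (index v q).+1 q); rewrite pathS_iff (take_path _ pq) ht /=.
by rewrite (take_nth v hi) last_rcons nth_index.
Qed.


Definition Xgen (V : finType) w (phi : wvert w w -> V) (P : wvert w w -> wvert w w -> seq V)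
  (phis : seq (wvert w w)) (edges : seq (wvert w w * wvert w w)) : {set V} :=
  [set v | has (fun z => v == phi z) phis || has (fun e => v \in P e.1 e.2) edges].

Lemma Xgen_disj (V : finType) (G : sgraph V) w phi P (phis1 phis2 : seq (wvert w w)) edges1 edges2 :
  wall_model G phi P ->
  (forall z, z \in phis1 -> in_wall z) -> (forall z, z \in phis2 -> in_wall z) ->
  (forall e, e \in edges1 -> wall_adj e.1 e.2) -> (forall e, e \in edges2 -> wall_adj e.1 e.2) ->
  (forall z, z \in phis1 -> z \in phis2 -> False) ->
  (forall e1 e2, e1 \in edges1 -> e2 \in edges2 -> [set e1.1; e1.2] = [set e2.1; e2.2] -> False) ->
  [disjoint Xgen phi P phis1 edges1 & Xgen phi P phis2 edges2].
Proof.
move=> [M1 _ _ M4 M5] i1 i2 a1 a2 dp de.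
apply/pred0P => v /=; apply/negbTE/negP; rewrite !inE => /andP [].
case/orP => [/hasP [z1 z1p /eqP ->] | /hasP [e1 e1p h1]];
  case/orP => [/hasP [z2 z2p /eqP e] | /hasP [e2 e2p h2]].
- by apply: (dp z1) => //; rewrite (M1 _ _ (i1 _ z1p) (i2 _ z2p) e).
- by rewrite (negbTE (M5 _ _ _ (a2 _ e2p) (i1 _ z1p))) in h2.
- by rewrite e (negbTE (M5 _ _ _ (a1 _ e1p) (i2 _ z2p))) in h1.
- case: (eqVneq [set e1.1; e1.2] [set e2.1; e2.2]) => [E | ne]; first exact: (de e1 e2).
  by have /hasP := M4 _ _ _ _ (a1 _ e1p) (a2 _ e2p) ne; apply; exists v.
Qed.

Lemma mk_inj2 w (x0 : wvert w w) i j i' j' : mk x0 i j = mk x0 i' j' ->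
  i < w -> j < w.*2 -> i' < w -> j' < w.*2 -> i = i' /\ j = j'.
Proof. by move=> e h1 h2 h3 h4; exact: mk_inj e. Qed.

Lemma set2_mk w (x0 : wvert w w) i1 j1 i2 j2 i3 j3 i4 j4 :
  [set mk x0 i1 j1; mk x0 i2 j2] = [set mk x0 i3 j3; mk x0 i4 j4] ->
  i1 < w -> j1 < w.*2 -> i2 < w -> j2 < w.*2 -> i3 < w -> j3 < w.*2 -> i4 < w -> j4 < w.*2 ->
  (i1 = i3 /\ j1 = j3 /\ i2 = i4 /\ j2 = j4) \/ (i1 = i4 /\ j1 = j4 /\ i2 = i3 /\ j2 = j3).
Proof.
move=> E *; case/set2_eq: E => [[/mk_inj2 e1 /mk_inj2 e2] | [/mk_inj2 e1 /mk_inj2 e2]].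
  by left; have [] := e1 _ _ _ _; have [] := e2 _ _ _ _.
by right; have [] := e1 _ _ _ _; have [] := e2 _ _ _ _.
Qed.

Definition p0 w (x0 : wvert w w) a b := mk x0 a.+1 b.*2.+2.
Definition p1 w (x0 : wvert w w) a b := mk x0 a.+1 b.*2.+3.
Definition p2 w (x0 : wvert w w) a b := mk x0 a.+1 b.*2.+4.
Definition pv w (x0 : wvert w w) a b := mk x0 a.+1 (ca b a.+1).
Definition pw w (x0 : wvert w w) a b := mk x0 a.+2 (ca b a.+1).

Definition Xs (V : finType) w (phi : wvert w w -> V) P (x0 : wvert w w) a b : {set V} :=
  Xgen phi P [:: p0 x0 a b; p1 x0 a b]
    [:: (p0 x0 a b, p1 x0 a b); (p1 x0 a b, p2 x0 a b); (pv x0 a b, pw x0 a b)].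

Lemma Xs_mem (V : finType) w (phi : wvert w w -> V) P (x0 : wvert w w) a b v :
  (v \in Xs phi P x0 a b) = [|| v == phi (p0 x0 a b), v == phi (p1 x0 a b),
     v \in P (p0 x0 a b) (p1 x0 a b), v \in P (p1 x0 a b) (p2 x0 a b) |
     v \in P (pv x0 a b) (pw x0 a b)].
Proof. by rewrite inE /= !orbF !orbA. Qed.

Lemma in_p0 w (x0 : wvert w w) a b : a.+3 <= w -> b.+3 <= w -> in_wall (p0 x0 a b).
Proof. by move=> *; apply: in_wall_int; lia. Qed.
Lemma in_p1 w (x0 : wvert w w) a b : a.+3 <= w -> b.+3 <= w -> in_wall (p1 x0 a b).
Proof. by move=> *; apply: in_wall_int; lia. Qed.

Lemma adj01 w (x0 : wvert w w) a b : a.+3 <= w -> b.+3 <= w -> wall_adj (p0 x0 a b) (p1 x0 a b).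
Proof. by move=> *; apply: wall_adj_of; try wl; apply: in_wall_int; lia. Qed.
Lemma adj12 w (x0 : wvert w w) a b : a.+3 <= w -> b.+3 <= w -> wall_adj (p1 x0 a b) (p2 x0 a b).
Proof. by move=> *; apply: wall_adj_of; try wl; apply: in_wall_int; lia. Qed.
Lemma adjvw w (x0 : wvert w w) a b : a.+3 <= w -> b.+3 <= w -> wall_adj (pv x0 a b) (pw x0 a b).
Proof.
move=> *; rewrite /pv /pw; have [[e o] | [e o]] := ca_cases b a.+1; rewrite e;
  by apply: wall_adj_of; try wl; apply: in_wall_int; lia.
Qed.

Lemma pv_cases w (x0 : wvert w w) a b : pv x0 a b = p0 x0 a b \/ pv x0 a b = p1 x0 a b.
Proof. by rewrite /pv /p0 /p1; have [[-> _] | [-> _]] := ca_cases b a.+1; auto. Qed.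

Lemma Xs_disj (V : finType) (G : sgraph V) w phi P (x0 : wvert w w) a b a' b' :
  wall_model G phi P -> a.+3 <= w -> b.+3 <= w -> a'.+3 <= w -> b'.+3 <= w ->
  (a != a') || (b != b') -> [disjoint Xs phi P x0 a b & Xs phi P x0 a' b'].
Proof.
move=> M ha hb ha' hb' ne; apply: (Xgen_disj M).
- by move=> z; rewrite !inE => /orP [] /eqP ->; [apply: in_p0 | apply: in_p1].
- by move=> z; rewrite !inE => /orP [] /eqP ->; [apply: in_p0 | apply: in_p1].
- by move=> e; rewrite !inE => /or3P [] /eqP -> /=; [apply: adj01 | apply: adj12 | apply: adjvw].
- by move=> e; rewrite !inE => /or3P [] /eqP -> /=; [apply: adj01 | apply: adj12 | apply: adjvw].
- move=> z; rewrite !inE => /orP [] /eqP -> /orP [] /eqP; rewrite /p0 /p1 => /mk_inj2; move: ne; lia.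
- move=> e1 e2; rewrite !inE => /or3P [] /eqP -> /or3P [] /eqP -> /=; rewrite /p0 /p1 /p2 /pv /pw;
  move/set2_mk; have [[e o] | [e o]] := ca_cases b a.+1; rewrite ?e;
  have [[e' o'] | [e' o']] := ca_cases b' a'.+1; rewrite ?e'; move: ne; lia.
Qed.


Definition charac w (x0 : wvert w w) (xs : seq (wvert w w)) (Q : nat -> nat -> Prop) :=
  forall z, z \in xs -> exists i j, [/\ i < w, j < w.*2, Q i j & z = mk x0 i j].

Lemma DLr (V : finType) (G : sgraph V) w phi P (x0 : wvert w w) xs1 xs2 Q1 Q2 i1 j1 i2 j2 :
  wall_model G phi P ->
  path (@wall_adj w w) (mk x0 i1 j1) xs1 -> path (@wall_adj w w) (mk x0 i2 j2) xs2 ->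
  charac x0 xs1 Q1 -> charac x0 xs2 Q2 -> (forall i j, Q1 i j -> Q2 i j -> False) ->
  i1 < w -> j1 < w.*2 -> i2 < w -> j2 < w.*2 -> ~ Q2 i1 j1 -> ~ Q1 i2 j2 ->
  forall v, v \in expw phi P (mk x0 i1 j1) xs1 -> v \in expw phi P (mk x0 i2 j2) xs2 -> False.
Proof.
move=> M pa1 pa2 c1 c2 dQ h1 h2 h3 h4 n1 n2 v; apply: (DL M pa1 pa2).
- move=> z /c1 [i [j [hi hj q1 ->]]] /c2 [i' [j' [hi' hj' q2 /mk_inj e]]].
  by have [ei ej] := e hi hj hi' hj'; subst; exact: dQ q1 q2.
- apply/negP => /c2 [i [j [hi hj q2 /mk_inj e]]].
  by have [ei ej] := e h1 h2 hi hj; subst.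
- apply/negP => /c1 [i [j [hi hj q1 /mk_inj e]]].
  by have [ei ej] := e h3 h4 hi hj; subst.
Qed.

Lemma ch_lft w (x0 : wvert w w) a b : a.+3 <= w -> b.+3 <= w ->
  charac x0 (lft x0 a.+1 b.*2.+2) (fun i j => i = a.+1 /\ j < b.*2.+2).
Proof. move=> ha hb z /lft_mem [j hj ->]; exists a.+1, j; split => //; lia. Qed.

Lemma ch_rgt w (x0 : wvert w w) a b : a.+3 <= w -> b.+3 <= w ->
  charac x0 (rgt x0 a.+1 b.*2.+3 (w.*2 - b.*2 - 4)) (fun i j => i = a.+1 /\ b.*2.+3 < j).
Proof. move=> ha hb z /rgt_mem [j [h1 h2 ->]]; exists a.+1, j; split => //; lia. Qed.

Lemma ch_upa w (x0 : wvert w w) a b : a.+3 <= w -> b.+3 <= w ->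
  charac x0 (upa x0 b a.+1) (fun i j => i < a.+1 /\ (j = b.*2.+2 \/ j = b.*2.+3)).
Proof. move=> ha hb z /upa_mem [i [j [h1 h2 ->]]]; exists i, j; split => //; lia. Qed.

Lemma ch_dna w (x0 : wvert w w) a b : a.+3 <= w -> b.+3 <= w ->
  charac x0 (dna x0 b a.+1 (w - a - 3).+1) (fun i j => a.+1 < i /\ (j = b.*2.+2 \/ j = b.*2.+3)).
Proof. move=> ha hb z /dna_mem [i [j [h1 h2 h3 ->]]]; exists i, j; split => //; lia. Qed.

Lemma P_inG (V : finType) (G : sgraph V) w phi P (x y : wvert w w) v :
  wf_graph G -> wall_model G phi P -> wall_adj x y -> v \in P x y -> v \in gV G.
Proof.
move=> wf [_ _ M3 _ _] xy vP; have [pp _ _] := M3 _ _ xy.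
by apply: (path_inG wf pp); rewrite mem_rcons inE vP orbT.
Qed.

Lemma Xs_sub (V : finType) (G : sgraph V) w phi P (x0 : wvert w w) a b :
  wf_graph G -> wall_model G phi P -> a.+3 <= w -> b.+3 <= w -> Xs phi P x0 a b \subset gV G.
Proof.
move=> wf M ha hb; have [_ M2 _ _ _] := M.
apply/subsetP => v; rewrite Xs_mem => /or4P [/eqP -> | /eqP -> | h | /orP [h | h]].
- exact: M2 (in_p0 x0 ha hb).
- exact: M2 (in_p1 x0 ha hb).
- exact: (P_inG wf M (adj01 x0 ha hb) h).
- exact: (P_inG wf M (adj12 x0 ha hb) h).
- exact: (P_inG wf M (adjvw x0 ha hb) h).
Qed.

Lemma Xs_conn (V : finType) (G : sgraph V) w phi P (x0 : wvert w w) a b :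
  wall_model G phi P -> a.+3 <= w -> b.+3 <= w -> connected_in G (Xs phi P x0 a b).
Proof.
move=> M ha hb; have [_ _ M3 _ _] := M.
set X := Xs phi P x0 a b.
have r0 : phi (p0 x0 a b) \in X by rewrite Xs_mem eqxx.
have [pp01 _ _] := M3 _ _ (adj01 x0 ha hb).
have [pp12 _ _] := M3 _ _ (adj12 x0 ha hb).
have [ppvw _ _] := M3 _ _ (adjvw x0 ha hb).
have s01 : {subset rcons (P (p0 x0 a b) (p1 x0 a b)) (phi (p1 x0 a b)) <= X}.
  by move=> v; rewrite mem_rcons inE Xs_mem => /orP [-> | ->]; rewrite ?orbT.
have r1 : reach G X (phi (p0 x0 a b)) (phi (p1 x0 a b)).
  by apply: (reach_pref pp01 s01); rewrite mem_rcons inE eqxx.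
apply: (conn_of_root r0) => v; rewrite Xs_mem => /or4P [/eqP -> | /eqP -> | h | /orP [h | h]].
- exact: reach_refl.
- exact: r1.
- by apply: (reach_pref pp01 s01); rewrite mem_rcons inE h orbT.
- apply: (reach_trans r1); rewrite rcons_path in pp12; case/andP: pp12 => pp12 _.
  by apply: (reach_pref pp12) => // u uP; rewrite Xs_mem uP !orbT.
- have rv : reach G X (phi (p0 x0 a b)) (phi (pv x0 a b)).
    by case: (pv_cases x0 a b) => ->; [exact: reach_refl | exact: r1].
  apply: (reach_trans rv); rewrite rcons_path in ppvw; case/andP: ppvw => ppvw _.
  by apply: (reach_pref ppvw) => // u uP; rewrite Xs_mem uP !orbT.
Qed.

Lemma Xs_adjH (V : finType) (G : sgraph V) w phi P (x0 : wvert w w) a b :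
  wall_model G phi P -> a.+3 <= w -> b.+4 <= w ->
  exists u v, [/\ u \in Xs phi P x0 a b, v \in Xs phi P x0 a b.+1 & adj G u v].
Proof.
move=> M ha hb; have [_ _ M3 _ _] := M.
have [pp _ _] := M3 _ _ (adj12 x0 ha (ltnW hb)).
exists (last (phi (p1 x0 a b)) (P (p1 x0 a b) (p2 x0 a b))), (phi (p2 x0 a b)); split.
- have := mem_last (phi (p1 x0 a b)) (P (p1 x0 a b) (p2 x0 a b)).
  by rewrite inE Xs_mem => /orP [-> | ->]; rewrite ?orbT.
- by rewrite Xs_mem /p2 /p0 doubleS eqxx.
- by rewrite rcons_path in pp; case/andP: pp.
Qed.

Lemma Xs_adjV (V : finType) (G : sgraph V) w phi P (x0 : wvert w w) a b :
  wall_model G phi P -> a.+4 <= w -> b.+3 <= w ->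
  exists u v, [/\ u \in Xs phi P x0 a b, v \in Xs phi P x0 a.+1 b & adj G u v].
Proof.
move=> M ha hb; have [_ _ M3 _ _] := M.
have [pp _ _] := M3 _ _ (adjvw x0 (ltnW ha) hb).
exists (last (phi (pv x0 a b)) (P (pv x0 a b) (pw x0 a b))), (phi (pw x0 a b)); split.
- have := mem_last (phi (pv x0 a b)) (P (pv x0 a b) (pw x0 a b)).
  rewrite inE Xs_mem => /orP [/eqP -> | ->]; rewrite ?orbT //.
  by case: (pv_cases x0 a b) => ->; rewrite eqxx ?orbT.
- rewrite Xs_mem /pw /p0 /p1.
  by have [[-> _] | [-> _]] := ca_cases b a.+1; rewrite eqxx ?orbT.
- by rewrite rcons_path in pp; case/andP: pp.
Qed.


Lemma Xs_ne (V : finType) (G Gt : sgraph V) k Gs w phi P (x0 : wvert w w) a b :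
  Flat G Gt k Gs -> wf_graph G -> wall_model G phi P ->
  (forall x, wall_peg x -> phi x \in gV (Gs 0)) -> a.+3 <= w -> b.+3 <= w ->
  exists v, v \in Xs phi P x0 a b :&: gV (Gs 0).
Proof.
move=> F wf M hpeg ha hb.
set s1 := mk x0 a.+1 b.*2.+2. set s2 := mk x0 a.+1 b.*2.+3.
set s3 := mk x0 a.+1 (co b a.+1). set s4 := mk x0 a.+1 (ca b a.+1).
set xs1 := lft x0 a.+1 b.*2.+2. set xs2 := rgt x0 a.+1 b.*2.+3 (w.*2 - b.*2 - 4).
set xs3 := upa x0 b a.+1. set xs4 := dna x0 b a.+1 (w - a - 3).+1.
have pa1 : path (@wall_adj w w) s1 xs1 by apply: lft_path; lia.
have pa2 : path (@wall_adj w w) s2 xs2 by apply: rgt_path; lia.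
have pa3 : path (@wall_adj w w) s3 xs3 by apply: upa_path; lia.
have pa4 : path (@wall_adj w w) s4 xs4 by apply: dna_path; lia.
have c1 := ch_lft (x0:=x0) ha hb. have c2 := ch_rgt (x0:=x0) ha hb.
have c3 := ch_upa (x0:=x0) ha hb. have c4 := ch_dna (x0:=x0) ha hb.
have s3X : phi s3 \in Xs phi P x0 a b.
  rewrite Xs_mem /s3 /p0 /p1; have [[-> _] | [-> _]] := co_cases b a.+1; by rewrite eqxx ?orbT.
have s4X : phi s4 \in Xs phi P x0 a b.
  rewrite Xs_mem /s4 /p0 /p1; have [[-> _] | [-> _]] := ca_cases b a.+1; by rewrite eqxx ?orbT.
have hco : co b a.+1 = b.*2.+2 \/ co b a.+1 = b.*2.+3 by have := co_cases b a.+1; tauto.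
have hca : ca b a.+1 = b.*2.+2 \/ ca b a.+1 = b.*2.+3 by have := ca_cases b a.+1; tauto.
apply: (@NE V G Gt k Gs _ (phi s1) (phi s2) (phi s3) (phi s4)
  (expw phi P s1 xs1) (expw phi P s2 xs2) (expw phi P s3 xs3) (expw phi P s4 xs4)
  F wf (@Xs_conn V G w phi P x0 a b M ha hb) (@Xs_sub V G w phi P x0 a b wf M ha hb)).
- by rewrite Xs_mem /s1 /p0 eqxx.
- by rewrite Xs_mem /s2 /p1 eqxx orbT.
- exact: s3X.
- exact: s4X.
- exact: E1 M pa1.
- exact: E1 M pa2.
- exact: E1 M pa3.
- exact: E1 M pa4.
- by rewrite E2 lft_last //; apply: hpeg; apply: peg_left; lia.
- rewrite E2 rgt_last; have -> : b.*2.+3 + (w.*2 - b.*2 - 4) = (w.*2).-1 by lia.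
  by apply: hpeg; apply: peg_right; lia.
- by rewrite E2 upa_last //; apply: hpeg; apply: peg_top.
- rewrite E2 dna_last; have -> : a.+1 + (w - a - 3).+1 = w.-1 by lia.
  have -> : a.+1 + (w - a - 3) = w.-2 by lia.
  by apply: hpeg; apply: peg_bot.
- apply: (DLr M pa1 pa2 c1 c2); try lia; by move=> i j; lia.
- apply: (DLr M pa1 pa3 c1 c3); try lia; by move=> i j; lia.
- apply: (DLr M pa1 pa4 c1 c4); try lia; by move=> i j; lia.
- apply: (DLr M pa2 pa3 c2 c3); try lia; by move=> i j; lia.
- apply: (DLr M pa2 pa4 c2 c4); try lia; by move=> i j; lia.
- apply: (DLr M pa3 pa4 c3 c4); try lia; by move=> i j; lia.
Qed.


Lemma adj_tr (V : finType) (G Gt : sgraph V) k Gs w phi P (x0 : wvert w w) a b a' b' :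
  Flat G Gt k Gs -> wf_graph G -> wall_model G phi P ->
  (forall x, wall_peg x -> phi x \in gV (Gs 0)) ->
  a.+3 <= w -> b.+3 <= w -> a'.+3 <= w -> b'.+3 <= w -> (a != a') || (b != b') ->
  (exists u v, [/\ u \in Xs phi P x0 a b, v \in Xs phi P x0 a' b' & adj G u v]) ->
  exists u v, [/\ u \in Xs phi P x0 a b :&: gV (Gs 0), v \in Xs phi P x0 a' b' :&: gV (Gs 0)
     & adj Gt u v].
Proof.
move=> F wf M hp ha hb ha' hb' ne [u [v [uX vY uv]]].
exact: (AT F wf (@Xs_disj V G w phi P x0 a b a' b' M ha hb ha' hb' ne)
  (@Xs_conn V G w phi P x0 a b M ha hb) (@Xs_conn V G w phi P x0 a' b' M ha' hb')
  (@Xs_ne V G Gt k Gs w phi P x0 a b F wf M hp ha hb)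
  (@Xs_ne V G Gt k Gs w phi P x0 a' b' F wf M hp ha' hb') uX vY uv).
Qed.

Lemma adj_swap (V : finType) (G : sgraph V) (X Y : {set V}) :
  (exists u v, [/\ u \in X, v \in Y & adj G u v]) ->
  (exists u v, [/\ u \in Y, v \in X & adj G u v]).
Proof. by move=> [u [v [h1 h2 h3]]]; exists v, u; rewrite adj_sym. Qed.

Theorem lemma3p12 (V : finType) (R : realType) (G C : sgraph V) (w : nat)
    (phi : wvert w w -> V) (P : wvert w w -> wvert w w -> seq V)
    (k : nat) (Gs : nat -> sgraph V) (Gt : sgraph V)
    (pos : V -> (R * R)%type) (arc : {set V} -> R -> (R * R)%type) :
  wf_graph G ->
  wall_model G phi P ->
  is_cycle C -> subgraph C G ->
  (forall x, wall_peg x -> phi x \in gV C) ->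
  C_flat_witness G C k Gs Gt pos arc ->
  has_grid_minor Gt (w - 2).
Proof.
move=> wf M _ _ hpegC cw.
have F := Flat_of cw.
have [_ _ [[sCV _] [_ [VGt _]]] _ _] := cw.
have hp : forall x, wall_peg x -> phi x \in gV (Gs 0).
  by move=> x /hpegC; apply: (subsetP sCV).
case: (leqP w 2) => hw.
  have no : 'I_(w - 2) -> False by case=> i hi; move: hi hw; clear; lia.
  by exists (fun _ => finset.set0); split; move=> x; case: (no x.1).
have h1 : 0 < w by move: hw; clear; lia.
have h2 : 0 < w.*2 by move: hw; clear; lia.
pose x0 : wvert w w := (Ordinal h1, Ordinal h2).
have bd : forall i : 'I_(w - 2), (i : nat).+3 <= w by move=> [i hi] /=; move: hi; clear; lia.
exists (fun x : 'I_(w - 2) * 'I_(w - 2) => Xs phi P x0 x.1 x.2 :&: gV (Gs 0)); split.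
- move=> [a b]; have [v hv] := @Xs_ne V G Gt k Gs w phi P x0 a b F wf M hp (bd a) (bd b).
  by apply/set0Pn; exists v.
- by move=> x; rewrite VGt subsetIr.
- by move=> [a b]; apply: (conn_tr F wf); exact: (@Xs_conn V G w phi P x0 a b M (bd a) (bd b)).
- move=> [a b] [a' b'] ne.
  apply: (disjointWl (subsetIl _ _)); apply: (disjointWr (subsetIl _ _)).
  by apply: (@Xs_disj V G w phi P x0 a b a' b' M (bd a) (bd b) (bd a') (bd b')); move: ne; rewrite xpair_eqE negb_and.
- move=> [a b] [a' b']; rewrite /grid_adj /= => /orP [/andP [/eqP ea /orP [/eqP eb | /eqP eb]] |
                                                  /andP [/eqP eb /orP [/eqP ea | /eqP ea]]].
  + apply: (@adj_tr V G Gt k Gs w phi P x0 a b a' b' F wf M hp (bd a) (bd b) (bd a') (bd b')); first by move: eb; clear; lia.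
    have := @Xs_adjH V G w phi P x0 a b M (bd a) (_ : b.+4 <= w); rewrite -eb ea; apply.
    by have := bd b'; rewrite -eb.
  + apply: (@adj_tr V G Gt k Gs w phi P x0 a b a' b' F wf M hp (bd a) (bd b) (bd a') (bd b')); first by move: eb; clear; lia.
    apply: adj_swap.
    have := @Xs_adjH V G w phi P x0 a' b' M (bd a') (_ : b'.+4 <= w); rewrite -eb -ea; apply.
    by have := bd b; rewrite -eb.
  + apply: (@adj_tr V G Gt k Gs w phi P x0 a b a' b' F wf M hp (bd a) (bd b) (bd a') (bd b')); first by move: ea; clear; lia.
    have := @Xs_adjV V G w phi P x0 a b M (_ : a.+4 <= w) (bd b); rewrite -ea eb; apply.
    by have := bd a'; rewrite -ea.
  + apply: (@adj_tr V G Gt k Gs w phi P x0 a b a' b' F wf M hp (bd a) (bd b) (bd a') (bd b')); first by move: ea; clear; lia.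
    apply: adj_swap.
    have := @Xs_adjV V G w phi P x0 a' b' M (_ : a'.+4 <= w) (bd b'); rewrite -ea -eb; apply.
    by have := bd a; rewrite -ea.
Qed.
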